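(* A general binary sextic $p \in H_6(\mathbb{C}^2)$ can be written as $p(x,y) = f^2(x,y) + g^3(x,y)$, where $f \in H_3(\mathbb{C}^2)$ is a cubic form and $g \in H_2(\mathbb{C}^2)$ is a quadratic form.
   Context: $H_d(\mathbb{C}^n)$ denotes the complex vector space of homogeneous polynomials of degree $d$ in $n$ variables. ''A general $p$ has property P'' means P holds for all $p$ in a nonempty Zariski-open subset of $H_d(\mathbb{C}^n)$. *)

(* Defs.v *)
From HB Require Import structures.
From mathcomp Require Import all_boot all_order all_algebra.
Set Implicit Arguments. Unset Strict Implicit. Unset Printing Implicit Defensive.
Import Order.TTheory GRing.Theory Num.Theory.
Local Open Scope ring_scope.

(* Binary forms in variables x, y are elements of {poly {poly R}}:
   p`_i`_j is the coefficient of x^j y^i  (outer variable = y, inner = x). *)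

Definition homog (R : nzRingType) (d : nat) (p : {poly {poly R}}) : Prop :=
  forall i j : nat, p`_i`_j != 0 -> (i + j)%N = d.

Definition coords (R : nzRingType) (d : nat) (p : {poly {poly R}}) : 'rV[R]_d.+1 :=
  \row_(i < d.+1) p`_i`_(d - i).

Inductive polyfun (R : nzRingType) (n : nat) : ('rV[R]_n -> R) -> Prop :=
  | pf_const (c : R) : polyfun (fun _ => c)
  | pf_coord (k : 'I_n) : polyfun (fun v => v ord0 k)
  | pf_add f g : polyfun f -> polyfun g -> polyfun (fun v => f v + g v)
  | pf_mul f g : polyfun f -> polyfun g -> polyfun (fun v => f v * g v).

Definition zero_locus (R : nzRingType) (n : nat) (S : ('rV[R]_n -> R) -> Prop)
  (v : 'rV[R]_n) : Prop := forall h, S h -> h v = 0.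

(* Main.v *)
Require Import Defs.
From HB Require Import structures.
From mathcomp Require Import all_boot all_order all_algebra all_field.
From mathcomp Require Import zify ring lra.
From Stdlib Require Import Classical.
Set Implicit Arguments. Unset Strict Implicit. Unset Printing Implicit Defensive.
Import Order.TTheory GRing.Theory Num.Theory.
Local Open Scope ring_scope.

Section Expr.
Variable R : numClosedFieldType.

Inductive expr (n : nat) : Type :=
| ECst of R | EVar of 'I_n | EAdd of expr n & expr n | EMul of expr n & expr n.
Arguments ECst {n}. Arguments EVar {n}.

Fixpoint eval n (e : expr n) (v : 'rV[R]_n) : R :=
  match e with
  | ECst c => c | EVar k => v ord0 k
  | EAdd a b => eval a v + eval b v | EMul a b => eval a v * eval b v end.

Fixpoint edeg n (e : expr n) : nat :=
  match e with
  | ECst _ => 0 | EVar _ => 1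
  | EAdd a b => maxn (edeg a) (edeg b) | EMul a b => (edeg a + edeg b)%N end.

Fixpoint ederiv n (k : 'I_n) (e : expr n) : expr n :=
  match e with
  | ECst _ => ECst 0 | EVar j => ECst (j == k)%:R
  | EAdd a b => EAdd (ederiv k a) (ederiv k b)
  | EMul a b => EAdd (if edeg a == 0%N then ECst 0 else EMul (ederiv k a) b)
                     (if edeg b == 0%N then ECst 0 else EMul a (ederiv k b)) end.

Fixpoint cp n (e : expr n) (Q : 'I_n -> {poly R}) : {poly R} :=
  match e with
  | ECst c => c%:P | EVar k => Q k
  | EAdd a b => cp a Q + cp b Q | EMul a b => cp a Q * cp b Q end.

Lemma cp_eval n (e : expr n) Q t : (cp e Q).[t] = eval e (\row_k (Q k).[t]).
Proof.
elim: e => [c|k|a IHa b IHb|a IHa b IHb] /=.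
- by rewrite hornerC.
- by rewrite mxE.
- by rewrite hornerD IHa IHb.
- by rewrite hornerM IHa IHb.
Qed.

Lemma cp_deg0 n (e : expr n) Q : edeg e = 0%N -> cp e Q = (eval e 0)%:P.
Proof.
elim: e => [c|k|a IHa b IHb|a IHa b IHb] //=.
- by move=> /eqP; rewrite -leqn0 geq_max !leqn0 => /andP[/eqP/IHa-> /eqP/IHb->]; rewrite polyCD.
- by move=> /eqP; rewrite addn_eq0 => /andP[/eqP/IHa-> /eqP/IHb->]; rewrite polyCM.
Qed.

Lemma cp_deriv n (e : expr n) Q :
  (cp e Q)^`() = \sum_k cp (ederiv k e) Q * (Q k)^`().
Proof.
elim: e => [c|j|a IHa b IHb|a IHa b IHb] /=.
- by rewrite derivC big1 // => k _; rewrite mul0r.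
- rewrite (bigD1 j) //= eqxx mul1r big1 ?addr0 // => k /negbTE.
  by rewrite eq_sym => ->; rewrite mul0r.
- by rewrite derivD IHa IHb -big_split /=; apply: eq_bigr => k _; rewrite mulrDl.
- rewrite derivM.
  have Ha : (cp a Q)^`() * cp b Q = \sum_k cp (if edeg a == 0%N then ECst 0 else EMul (ederiv k a) b) Q * (Q k)^`().
    case: eqP => [/(@cp_deg0 _ a Q)->|_]; first by rewrite derivC mul0r big1 // => k _; rewrite mul0r.
    by rewrite IHa mulr_suml; apply: eq_bigr => k _ /=; rewrite -!mulrA [_^`() * _]mulrC.
  have Hb : cp a Q * (cp b Q)^`() = \sum_k cp (if edeg b == 0%N then ECst 0 else EMul a (ederiv k b)) Q * (Q k)^`().
    case: eqP => [/(@cp_deg0 _ b Q)->|_]; first by rewrite derivC mulr0 big1 // => k _; rewrite mul0r.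
    by rewrite IHb mulr_sumr; apply: eq_bigr => k _ /=; rewrite mulrA.
  rewrite Ha Hb -big_split /=; apply: eq_bigr => k _; rewrite mulrDl //.
Qed.

Lemma edeg_deriv n (k : 'I_n) (e : expr n) : (edeg (ederiv k e) <= (edeg e).-1)%N.
Proof.
elim: e => [c|j|a IHa b IHb|a IHa b IHb] //=.
- move: IHa IHb; rewrite -!subn1; lia.
- rewrite geq_max; apply/andP; split.
  + case: eqP => //= Ha; move: IHa; rewrite -!subn1; lia.
  + case: eqP => //= Hb; move: IHb; rewrite -!subn1; lia.
Qed.

Lemma polyfun_eval n (e : expr n) : polyfun (eval e).
Proof.
elim: e => [c|k|a IHa b IHb|a IHa b IHb] /=.
- exact: pf_const.
- exact: pf_coord.
- exact: pf_add.
- exact: pf_mul.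
Qed.

Lemma poly_fun0 (P : {poly R}) : (forall t, P.[t] = 0) -> P = 0.
Proof.
move=> H; apply/eqP; apply/negPn/negP => P0.
suff: (size P < size P)%N by rewrite ltnn.
have := @max_poly_roots _ P [seq i%:R | i <- iota 0 (size P)] P0.
rewrite size_map size_iota; apply.
- by apply/allP => x /mapP[i _ ->]; rewrite /root H.
- rewrite map_inj_uniq ?iota_uniq // => i j /eqP; rewrite eqr_nat => /eqP.
  done.
Qed.

Lemma deriv0_const (P : {poly R}) : P^`() = 0 -> P = (P`_0)%:P.
Proof.
move=> H; apply: size1_polyC; rewrite leqNgt; apply/negP => HP.
have : P`_(size P).-1 != 0 by rewrite -lead_coefE lead_coef_eq0 -size_poly_gt0; lia.
have : P^`()`_((size P).-2) = 0 by rewrite H coef0.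
rewrite coef_deriv; have -> : ((size P).-2.+1 = (size P).-1)%N by lia.
by move/eqP; rewrite mulrn_eq0 => /orP[/eqP|/eqP->]; [lia | rewrite eqxx].
Qed.

Definition line n (x v : 'rV[R]_n) : 'I_n -> {poly R} :=
  fun k => (x ord0 k)%:P + (v ord0 k)%:P * 'X.

Lemma row_line n (x v : 'rV[R]_n) t : \row_k (line x v k).[t] = x + t *: v.
Proof.
apply/rowP => k; rewrite !mxE /line hornerD hornerC hornerMX hornerC.
by rewrite mulrC.
Qed.

Definition linep n (h : 'rV[R]_n -> R) :=
  forall x v, exists P : {poly R}, forall t, h (x + t *: v) = P.[t].

Lemma linep_cst n c : linep (fun _ : 'rV[R]_n => c).
Proof. by move=> x v; exists c%:P => t; rewrite hornerC. Qed.

Lemma linep_add n (a b : 'rV[R]_n -> R) : linep a -> linep b -> linep (fun x => a x + b x).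
Proof.
move=> Ha Hb x v; have [P HP] := Ha x v; have [P' HP'] := Hb x v.
by exists (P + P') => t; rewrite HP HP' hornerD.
Qed.

Lemma linep_mul n (a b : 'rV[R]_n -> R) : linep a -> linep b -> linep (fun x => a x * b x).
Proof.
move=> Ha Hb x v; have [P HP] := Ha x v; have [P' HP'] := Hb x v.
by exists (P * P') => t; rewrite HP HP' hornerM.
Qed.

Lemma linep_ext n (a b : 'rV[R]_n -> R) : (forall x, a x = b x) -> linep a -> linep b.
Proof. by move=> E Ha x v; have [P HP] := Ha x v; exists P => t; rewrite -E. Qed.

Lemma linep_sum n (I : Type) (r : seq I) (F : I -> 'rV[R]_n -> R) :
  (forall i, linep (F i)) -> linep (fun x => \sum_(i <- r) F i x).
Proof.
move=> HF; elim: r => [|i r IH].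
  by apply: linep_ext (linep_cst 0) => x; rewrite big_nil.
by apply: linep_ext (linep_add (HF i) IH) => x; rewrite big_cons.
Qed.

Lemma linep_prod n (I : Type) (r : seq I) (F : I -> 'rV[R]_n -> R) :
  (forall i, linep (F i)) -> linep (fun x => \prod_(i <- r) F i x).
Proof.
move=> HF; elim: r => [|i r IH].
  by apply: linep_ext (linep_cst 1) => x; rewrite big_nil.
by apply: linep_ext (linep_mul (HF i) IH) => x; rewrite big_cons.
Qed.

Lemma linep_eval n (e : expr n) : linep (eval e).
Proof. by move=> x v; exists (cp e (line x v)) => t; rewrite cp_eval row_line. Qed.

Lemma prod_zero n (a b : 'rV[R]_n -> R) : linep a -> linep b ->
  (forall x, a x * b x = 0) -> (exists x, a x != 0) -> forall x, b x = 0.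
Proof.
move=> Ha Hb H [x1 Hx1] x2.
have [P HP] := Ha x1 (x2 - x1); have [P' HP'] := Hb x1 (x2 - x1).
have : P * P' = 0 by apply: poly_fun0 => t; rewrite hornerM -HP -HP' H.
move/eqP; rewrite mulf_eq0 => /orP[/eqP P0|/eqP P0].
  by move: Hx1; have := HP 0; rewrite scale0r addr0 P0 horner0 => ->; rewrite eqxx.
by have := HP' 1; rewrite scale1r (addrC x1) subrK P0 horner0.
Qed.

Lemma const_of_deriv n (e : expr n) :
  (forall k x, eval (ederiv k e) x = 0) -> forall x y, eval e x = eval e y.
Proof.
move=> H x y.
have D : (cp e (line x (y - x)))^`() = 0.
  rewrite cp_deriv; apply: poly_fun0 => t; rewrite horner_sum big1 // => k _.
  by rewrite hornerM cp_eval H mul0r.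
have := deriv0_const D => E.
have := cp_eval e (line x (y - x)) 0; have := cp_eval e (line x (y - x)) 1.
rewrite !row_line scale0r addr0 scale1r (addrC x) subrK E !hornerC => <- <-.
done.
Qed.

Lemma deg0_const n (e : expr n) x y : edeg e = 0%N -> eval e x = eval e y.
Proof.
move=> H.
suff K z : eval e z = eval e 0 by rewrite !K.
have := cp_eval e (fun k => (z ord0 k)%:P) 0; rewrite cp_deg0 // hornerC => ->.
by congr eval; apply/rowP => k; rewrite mxE hornerC.
Qed.

Definition delta n (k : 'I_n) : 'rV[R]_n := \row_i (i == k)%:R.

Lemma linep_det n (J : 'rV[R]_n -> 'M[R]_n) :
  (forall j k, linep (fun w => J w j k)) -> linep (fun w => \det (J w)).
Proof.
move=> HJ; rewrite /determinant.
apply: linep_sum => s; apply: linep_mul; first exact: linep_cst.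
by apply: linep_prod => i; apply: HJ.
Qed.

Theorem dominance n (Phi : 'rV[R]_n -> 'rV[R]_n)
  (PhiP : ('I_n -> {poly R}) -> 'I_n -> {poly R}) (J : 'rV[R]_n -> 'M[R]_n) :
  (forall Q t, Phi (\row_k (Q k).[t]) = \row_j (PhiP Q j).[t]) ->
  (forall w j k, J w j k = (PhiP (line w (delta k)) j)`_1) ->
  (forall j k, linep (fun w => J w j k)) ->
  (exists w0, \det (J w0) != 0) ->
  forall e : expr n, (forall w, eval e (Phi w) = 0) -> forall v, eval e v = 0.
Proof.
move=> Hc HJ HJl [w0 Hw0] e.
suff: forall d (e : expr n), (edeg e < d)%N ->
   (forall w, eval e (Phi w) = 0) -> forall v, eval e v = 0 by apply; apply: ltnSn.
elim=> // d IH {}e He Hz v.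
have Hlin : forall e' : expr n, linep (fun w => eval e' (Phi w)).
  move=> e' x u; exists (cp e' (PhiP (line x u))) => t.
  by rewrite cp_eval -Hc row_line.
case: (edeg e =P 0%N) => [H0|Hn0].
  by rewrite (@deg0_const _ e v (Phi w0) H0) Hz.
have Hder : forall j w, eval (ederiv j e) (Phi w) = 0.
  move=> j.
  have chain : forall w, (\row_j eval (ederiv j e) (Phi w)) *m J w = 0.
    move=> w; apply/rowP => k; rewrite !mxE.
    set Q := PhiP (line w (delta k)).
    have Z : cp e Q = 0.
      apply: poly_fun0 => t; rewrite cp_eval -Hc row_line; exact: Hz.
    have := congr1 (fun P => P.[0]) (cp_deriv e Q); rewrite Z derivC horner0.
    rewrite horner_sum => E0; rewrite [RHS]E0;  apply: eq_bigr => i _; rewrite !mxE hornerM cp_eval.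
    rewrite -Hc row_line scale0r addr0 HJ horner_coef0 coef_deriv mulr1n //.
  have P0 : forall w, \det (J w) * eval (ederiv j e) (Phi w) = 0.
    move=> w; have := chain w.
    move/(congr1 (fun M => M *m \adj (J w))); rewrite -mulmxA mul_mx_adj mul_mx_scalar mul0mx.
    by move/rowP/(_ j); rewrite !mxE.
  exact: (prod_zero (linep_det HJl) (Hlin _) P0 (ex_intro _ w0 Hw0)).
have Hd : forall k x, eval (ederiv k e) x = 0.
  move=> k; apply: IH (Hder k).
  have := edeg_deriv k e; move: He Hn0; lia.
by rewrite (const_of_deriv Hd v (Phi w0)) Hz.
Qed.


Fixpoint epow n (e : expr n) (m : nat) : expr n :=
  if m is m'.+1 then EMul (epow e m') e else ECst 1.

Fixpoint t2e n (t : GRing.term R) : expr n :=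
  match t with
  | GRing.Var i => if @insub nat (fun i => (i < n)%N) 'I_n i is Some k then EVar k else ECst 0
  | GRing.Const c => ECst c
  | GRing.NatConst m => ECst m%:R
  | GRing.Add a b => EAdd (t2e n a) (t2e n b)
  | GRing.Opp a => EMul (ECst (-1)) (t2e n a)
  | GRing.NatMul a m => EMul (t2e n a) (ECst m%:R)
  | GRing.Mul a b => EMul (t2e n a) (t2e n b)
  | GRing.Inv _ => ECst 0
  | GRing.Exp a m => epow (t2e n a) m
  end.

Definition env n (v : 'rV[R]_n) : seq R := [seq v ord0 k | k <- enum 'I_n].

Lemma env_nth n (v : 'rV[R]_n) i :
  nth 0 (env v) i = if @insub nat (fun i => (i < n)%N) 'I_n i is Some k then v ord0 k else 0.
Proof.
case: insubP => [k Hi Hk|Hi].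
  have Hk' : nat_of_ord k = i := Hk.
  by rewrite -Hk' /env (nth_map k) ?size_enum_ord // nth_ord_enum.
by rewrite nth_default // size_map size_enum_ord leqNgt.
Qed.

Lemma t2e_eval n (t : GRing.term R) (v : 'rV[R]_n) :
  GRing.rterm t -> eval (t2e n t) v = GRing.eval (env v) t.
Proof.
elim: t => [i|c|m|a IHa b IHb|a IHa|a IHa m|a IHa b IHb|a IHa|a IHa m] //=.
- by rewrite env_nth; case: insubP.
- by move=> /andP[/IHa-> /IHb->].
- by move=> /IHa->; rewrite mulN1r.
- by move=> /IHa->; rewrite mulr_natr.
- by move=> /andP[/IHa-> /IHb->].
- move=> /IHa <-; elim: m => [|m IHm] /=; first by rewrite expr0.
  by rewrite IHm exprSr.
Qed.

Lemma nz_mul n (a b : expr n) : (exists v, eval a v != 0) -> (exists v, eval b v != 0) ->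
  exists v, eval a v * eval b v != 0.
Proof.
move=> Ha [y Hy]; apply: NNPP => H.
have Z : forall x, eval a x * eval b x = 0.
  by move=> x; apply/eqP; apply: negbNE; apply/negP => K; apply: H; exists x.
by move: Hy; rewrite (prod_zero (linep_eval a) (linep_eval b) Z Ha y) eqxx.
Qed.

Lemma generic_qf n (f : GRing.formula R) : GRing.qf_form f -> GRing.rformula f ->
  exists (q : expr n) (b : bool), (exists v, eval q v != 0) /\
    forall v, eval q v != 0 -> GRing.qf_eval (env v) f = b.
Proof.
have one : exists v : 'rV[R]_n, eval (ECst 1) v != 0 by exists 0; rewrite /= oner_neq0.
have bin : forall (op : bool -> bool -> bool) f1 f2,
   (exists (q : expr n) (b : bool), (exists v, eval q v != 0) /\
    forall v, eval q v != 0 -> GRing.qf_eval (env v) f1 = b) ->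
   (exists (q : expr n) (b : bool), (exists v, eval q v != 0) /\
    forall v, eval q v != 0 -> GRing.qf_eval (env v) f2 = b) ->
   exists (q : expr n) (b : bool), (exists v, eval q v != 0) /\
    forall v, eval q v != 0 -> op (GRing.qf_eval (env v) f1) (GRing.qf_eval (env v) f2) = b.
  move=> op f1 f2 [q1 [b1 [N1 H1]]] [q2 [b2 [N2 H2]]].
  exists (EMul q1 q2), (op b1 b2); split; first exact: nz_mul.
  by move=> v /=; rewrite mulf_eq0 negb_or => /andP[/H1-> /H2->].
elim: f => [b|t1 t2|t|f1 IH1 f2 IH2|f1 IH1 f2 IH2|f1 IH1 f2 IH2|f1 IH1|i f1 IH1|i f1 IH1] //=.
- by move=> _ _; exists (ECst 1), b; split.
- move=> _ /andP[r1 r2].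
  set d := EAdd (t2e n t1) (EMul (ECst (-1)) (t2e n t2)).
  have Ed : forall v, eval d v = GRing.eval (env v) t1 - GRing.eval (env v) t2.
    by move=> v; rewrite /= !t2e_eval // mulN1r.
  case: (classic (exists v, eval d v != 0)) => [Hd|Hd].
    exists d, false; split => // v; rewrite Ed subr_eq0 => /negbTE //.
  exists (ECst 1), true; split => // v _; apply/eqP.
  apply/eqP; rewrite -subr_eq0 -Ed; apply/negPn/negP => K; apply: Hd; by exists v.
- by move=> /andP[q1 q2] /andP[r1 r2]; apply: bin; [apply: IH1|apply: IH2].
- by move=> /andP[q1 q2] /andP[r1 r2]; apply: bin; [apply: IH1|apply: IH2].
- by move=> /andP[q1 q2] /andP[r1 r2]; apply: (bin implb); [apply: IH1|apply: IH2].
- move=> q1 r1; have [q [b [N H]]] := IH1 q1 r1.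
  by exists q, (~~ b); split => // v /H ->.
Qed.



End Expr.
Arguments delta {R n}.
Arguments ECst {R n}.
Arguments EVar {R n}.

Definition PhiA (A : comNzRingType) (Q : 'I_7 -> A) (j : 'I_7) : A :=
  ((\poly_(i < 4) Q (inord i)) ^+ 2 + (\poly_(i < 3) Q (inord (4 + i))) ^+ 3)`_j.

Lemma PhiA_ext (A : comNzRingType) (Q Q' : 'I_7 -> A) j :
  (forall k, Q k = Q' k) -> PhiA Q j = PhiA Q' j.
Proof.
move=> E; rewrite /PhiA.
have -> : \poly_(i < 4) Q (inord i) = \poly_(i < 4) Q' (inord i).
  by apply/polyP => i; rewrite !coef_poly E.
have -> // : \poly_(i < 3) Q (inord (4 + i)) = \poly_(i < 3) Q' (inord (4 + i)).
by apply/polyP => i; rewrite !coef_poly E.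
Qed.

Lemma map_poly_poly (A B : comNzRingType) (m : {rmorphism A -> B}) n (E : nat -> A) :
  map_poly m (\poly_(i < n) E i) = \poly_(i < n) m (E i).
Proof. apply/polyP => i; rewrite coef_map !coef_poly; case: (i < n)%N => //; exact: raddf0. Qed.

Lemma PhiA_nat (A B : comNzRingType) (m : {rmorphism A -> B}) (Q : 'I_7 -> A) j :
  PhiA (fun k => m (Q k)) j = m (PhiA Q j).
Proof.
rewrite /PhiA -coef_map rmorphD !rmorphXn /= !map_poly_poly //.
Qed.


Section Spec.
Variable R : numClosedFieldType.

Definition Phi (w : 'rV[R]_7) : 'rV[R]_7 := \row_j PhiA (fun k => w ord0 k) j.

Lemma Phi_curve (Q : 'I_7 -> {poly R}) t :
  Phi (\row_k (Q k).[t]) = \row_j (PhiA Q j).[t].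
Proof.
apply/rowP => j; rewrite !mxE -[_.[t]]/(horner_eval t _) -PhiA_nat.
by apply: PhiA_ext => k; rewrite mxE.
Qed.


Definition J (w : 'rV[R]_7) : 'M[R]_7 := \matrix_(j, k) (PhiA (line w (delta k)) j)`_1.

Lemma line_horner n (x v : 'rV[R]_n) k t : (line x v k).[t] = (x + t *: v) ord0 k.
Proof. by rewrite -row_line mxE. Qed.

Lemma J_linep j k : linep (fun w => J w j k).
Proof.
move=> x v.
pose Q2 := fun k' => (line x v k')%:P + ((delta k) ord0 k')%:P%:P * 'X : {poly {poly R}}.
exists (PhiA Q2 j)`_1 => t; rewrite mxE.
have -> : PhiA (line (x + t *: v) (delta k)) j = map_poly (horner_eval t) (PhiA Q2 j).
  rewrite -PhiA_nat; apply: PhiA_ext => k'.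
  rewrite /Q2 rmorphD rmorphM /= !map_polyC map_polyX /= !horner_evalE hornerC.
  by rewrite line_horner.
by rewrite coef_map.
Qed.

Definition w0 : 'rV[R]_7 := \row_k ((val k == 0%N) || (val k == 6%N))%:R.

Lemma coefT1 (P0 P1 P2 P3 : {poly {poly R}}) j :
  ((P0 + ('X)%:P * P1 + ('X ^+ 2)%:P * P2 + ('X ^+ 3)%:P * P3)`_j)`_1 = (P0`_j)`_1 + (P1`_j)`_0.
Proof.
rewrite !coefD !coefCM coefXM /= (coefXnM 2) (coefXnM 3) /=.
by rewrite !addr0.
Qed.

Lemma coefnat1 (m : nat) : ((m%:R : {poly R})`_1) = 0.
Proof. by rewrite coefMn coef1 mul0rn. Qed.

Lemma J_w0 : J w0 = diag_mx (\row_k (if (val k < 4)%N then 2 else 3)).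
Proof.
apply/matrixP => j k; rewrite !mxE.
pose T : {poly {poly R}} := ('X)%:P.
have T2 : T ^+ 2 = ('X ^+ 2)%:P by rewrite rmorphXn.
have T3 : T ^+ 3 = ('X ^+ 3)%:P by rewrite rmorphXn.
have vi : forall i, (i < 7)%N -> val (inord i : 'I_7) = i by move=> i Hi; apply: inordK.
case: (ltnP k 4) => Hk.
  have EF : \poly_(i < 4) line w0 (delta k) (inord i) = 1 + T * 'X^k.
    apply/polyP => i; rewrite coef_poly coefD coef1 coefCM coefXn.
    case: (ltnP i 4) => Hi.
      rewrite /line !mxE -val_eqE /= !vi; try lia.
      rewrite (_ : (i == 6)%N = false) ?orbF; last by apply/eqP; lia.
      by rewrite polyC_natr polyC_natr mulrC.
    rewrite (_ : (i == 0)%N = false); last by apply/eqP; lia.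
    rewrite (_ : (i == k)%N = false); last by apply/eqP; lia.
    by rewrite mulr0 addr0.
  have EG : \poly_(i < 3) line w0 (delta k) (inord (4 + i)) = 'X^2.
    apply/polyP => i; rewrite coef_poly coefXn.
    case: (ltnP i 3) => Hi.
      rewrite /line !mxE -val_eqE /= !vi; try lia.
      rewrite (_ : (4 + i == k)%N = false); last by apply/eqP; lia.
      rewrite (_ : (4 + i == 0)%N = false) //=.
      rewrite (_ : (4 + i == 6)%N = (i == 2)%N); last by apply/eqP/eqP; lia.
      by rewrite polyC0 mul0r addr0 polyC_natr.
    by rewrite (_ : (i == 2)%N = false) //; apply/eqP; lia.
  rewrite /PhiA EF EG.
  have -> : (1 + T * 'X^k) ^+ 2 + ('X^2) ^+ 3 =
     (1 + 'X^6) + T * ('X^k *+ 2) + ('X ^+ 2)%:P * ('X^k ^+ 2) + ('X ^+ 3)%:P * 0.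
    by rewrite -T2; ring.
  rewrite coefT1 coefD coef1 coefXn coefD !coefnat1 add0r coefMn coefXn add0r coefMn coefMn coef1 /=.
  case: (eqVneq j k) => [->|ne]; first by rewrite eqxx Hk.
  rewrite (_ : (nat_of_ord j == nat_of_ord k) = false) ?mulr0n ?mul0rn //.
  by apply/eqP => /val_inj E; move: ne; rewrite E eqxx.
have EF : \poly_(i < 4) line w0 (delta k) (inord i) = 1.
  apply/polyP => i; rewrite coef_poly coef1.
  case: (ltnP i 4) => Hi.
    rewrite /line !mxE -val_eqE /= !vi; try lia.
    rewrite (_ : (i == 6)%N = false) ?orbF; last by apply/eqP; lia.
    rewrite (_ : (i == k)%N = false); last by apply/eqP; lia.
    by rewrite polyC0 mul0r addr0 polyC_natr.
  by rewrite (_ : (i == 0)%N = false) //; apply/eqP; lia.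
have EG : \poly_(i < 3) line w0 (delta k) (inord (4 + i)) = 'X^2 + T * 'X^(k - 4).
  apply/polyP => i; rewrite coef_poly coefD coefXn coefCM coefXn.
  case: (ltnP i 3) => Hi.
    rewrite /line !mxE -val_eqE /= !vi; try lia.
    rewrite (_ : (4 + i == k)%N = (i == k - 4)%N); last by apply/eqP/eqP; lia.
    rewrite (_ : (4 + i == 0)%N = false) //=.
    rewrite (_ : (4 + i == 6)%N = (i == 2)%N); last by apply/eqP/eqP; lia.
    by rewrite !polyC_natr mulrC.
  rewrite (_ : (i == 2)%N = false); last by apply/eqP; lia.
  rewrite (_ : (i == k - 4)%N = false); last by apply/eqP; have := ltn_ord k; lia.
  by rewrite mulr0 addr0.
rewrite /PhiA EF EG.
have -> : 1 ^+ 2 + ('X^2 + T * 'X^(k - 4)) ^+ 3 =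
   (1 + 'X^6) + T * (('X^4 * 'X^(k - 4)) *+ 3) + ('X ^+ 2)%:P * (('X^2 * 'X^(k - 4) ^+ 2) *+ 3)
   + ('X ^+ 3)%:P * ('X^(k - 4) ^+ 3).
  by rewrite -T2 -T3; ring.
rewrite coefT1 coefD coef1 coefXn coefD !coefnat1 add0r coefMn -exprD subnKC //.
rewrite add0r coefXn coefMn coefMn coef1 /=.
case: (eqVneq j k) => [->|ne]; first by rewrite eqxx ltnNge Hk.
rewrite (_ : (nat_of_ord j == nat_of_ord k) = false) ?mulr0n ?mul0rn //.
by apply/eqP => /val_inj E; move: ne; rewrite E eqxx.
Qed.

Lemma J_det : \det (J w0) != 0.
Proof.
rewrite J_w0 det_diag; apply/prodf_neq0 => k _; rewrite mxE.
by case: ifP => _; rewrite pnatr_eq0.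
Qed.

End Spec.
Arguments w0 {R}.

Section Form.
Variable R : numClosedFieldType.
Local Notation tF := (GRing.term R).

Definition fT : seq tF := [:: GRing.Var _ 7; GRing.Var _ 8; GRing.Var _ 9; GRing.Var _ 10].
Definition gT : seq tF := [:: GRing.Var _ 11; GRing.Var _ 12; GRing.Var _ 13].
Definition PT : seq tF := ClosedFieldQE.sumpT (ClosedFieldQE.mulpT fT fT)
  (ClosedFieldQE.mulpT gT (ClosedFieldQE.mulpT gT gT)).
Definition body : GRing.formula R :=
  foldr (fun j f => GRing.And (GRing.Equal (GRing.Var _ j) (nth (GRing.Const 0) PT j)) f)
    (GRing.Bool true) (iota 0 7).
Definition Fform : GRing.formula R :=
  GRing.Exists 7 (GRing.Exists 8 (GRing.Exists 9 (GRing.Exists 10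
  (GRing.Exists 11 (GRing.Exists 12 (GRing.Exists 13 body)))))).

Lemma eval_poly_coef (e : seq R) (p : seq tF) j :
  (ClosedFieldQE.eval_poly e p)`_j = GRing.eval e (nth (GRing.Const 0) p j).
Proof.
elim: p j => [|c p IH] j /=; first by rewrite coef0 nth_nil.
rewrite coefD coefMX coefC; case: j => [|j] /=; first by rewrite add0r.
by rewrite addr0 IH.
Qed.

Lemma rterm_nth (s : seq tF) j : all (@GRing.rterm R) s -> GRing.rterm (nth (GRing.Const 0) s j).
Proof.
move=> H; case: (ltnP j (size s)) => Hj; first exact: (all_nthP _ H).
by rewrite nth_default.
Qed.

Lemma rPT : all (@GRing.rterm R) PT.
Proof. change (ClosedFieldQE.rpoly PT); rewrite /PT; apply: ClosedFieldQE.rsumpT; apply: ClosedFieldQE.rmulpT => //; apply: ClosedFieldQE.rmulpT. Qed.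

Lemma rFform : GRing.rformula Fform.
Proof.
rewrite /Fform /= /body.
done.
Qed.

Lemma foldr_holds e (s : seq nat) (T : nat -> tF) :
  GRing.holds e (foldr (fun j f => GRing.And (GRing.Equal (GRing.Var _ j) (T j)) f)
    (GRing.Bool true) s) <-> forall j, j \in s -> e`_j = GRing.eval e (T j).
Proof.
elim: s => [|a s IH] /=; first by split.
split.
  by move=> [H1 /IH H2] j; rewrite inE => /orP[/eqP->|/H2].
move=> H; split; first by apply: H; rewrite inE eqxx.
by apply/IH => j Hj; apply: H; rewrite inE Hj orbT.
Qed.

Lemma body_holds e : GRing.holds e body <->
  forall j, (j < 7)%N -> e`_j = PhiA (fun k : 'I_7 => e`_(7 + k)) (inord j).
Proof.
have EP : forall j, (j < 7)%N ->
   GRing.eval e (nth (GRing.Const 0) PT j) = PhiA (fun k : 'I_7 => e`_(7 + k)) (inord j).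
  move=> j Hj; rewrite -eval_poly_coef /PT ClosedFieldQE.eval_sumpT !ClosedFieldQE.eval_mulpT.
  rewrite /PhiA inordK //.
  have -> : ClosedFieldQE.eval_poly e fT = \poly_(i < 4) e`_(7 + (inord i : 'I_7)).
    apply/polyP => i; rewrite eval_poly_coef coef_poly.
    case: (ltnP i 4) => Hi; last by rewrite nth_default.
    by rewrite inordK; [case: i Hi => [|[|[|[|i]]]] | lia].
  have -> : ClosedFieldQE.eval_poly e gT = \poly_(i < 3) e`_(7 + (inord (4 + i) : 'I_7)).
  apply/polyP => i; rewrite eval_poly_coef coef_poly.
  case: (ltnP i 3) => Hi; last by rewrite nth_default.
  by rewrite inordK; [case: i Hi => [|[|[|i]]] | lia].
  by rewrite !exprS !expr0 !mulr1.
rewrite /body foldr_holds.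
split=> H j Hj.
  by rewrite -EP // H // mem_iota.
have Hj' : (j < 7)%N by move: Hj; rewrite mem_iota.
by rewrite EP // H.
Qed.

End Form.
Arguments Fform {R}.
Arguments body {R}.
Arguments PT {R}.

Section Sem.
Variable R : numClosedFieldType.

Definition chain (e : seq R) a0 a1 a2 a3 a4 a5 a6 :=
  set_nth 0 (set_nth 0 (set_nth 0 (set_nth 0 (set_nth 0 (set_nth 0 (set_nth 0 e
    7 a0) 8 a1) 9 a2) 10 a3) 11 a4) 12 a5) 13 a6.

Lemma chain_lo e a0 a1 a2 a3 a4 a5 a6 j : (j < 7)%N ->
  nth 0 (chain e a0 a1 a2 a3 a4 a5 a6) j = nth 0 e j.
Proof.
move=> Hj; rewrite /chain.
have F : forall m, (7 <= m)%N -> (j == m) = false by move=> m Hm; apply/eqP; lia.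
by do 7!(rewrite nth_set_nth /= F //).
Qed.

Lemma chain_hi e a0 a1 a2 a3 a4 a5 a6 (k : 'I_7) :
  nth 0 (chain e a0 a1 a2 a3 a4 a5 a6) (7 + k) = nth 0 [:: a0; a1; a2; a3; a4; a5; a6] k.
Proof.
by rewrite /chain; case: k => [[|[|[|[|[|[|[|k]]]]]]] Hk] //=; do !(rewrite nth_set_nth /=).
Qed.

Lemma env_lo (v : 'rV[R]_7) (j : 'I_7) : nth 0 (env v) j = v ord0 j.
Proof.
rewrite env_nth; case: insubP => [k _ Hk|]; last by rewrite ltn_ord.
by congr (v ord0 _); apply: val_inj.
Qed.

Lemma Fform_env (v : 'rV[R]_7) : GRing.holds (env v) Fform <-> exists w, v = Phi w.
Proof.
rewrite /Fform /=; split.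
  move=> [a0 [a1 [a2 [a3 [a4 [a5 [a6 /body_holds H]]]]]]].
  exists (\row_k nth 0 [:: a0; a1; a2; a3; a4; a5; a6] k).
  apply/rowP => j; rewrite !mxE.
  have := H j (ltn_ord j); rewrite inord_val -/(chain _ _ _ _ _ _ _ _) chain_lo // env_lo => ->.
  by apply: PhiA_ext => k; rewrite chain_hi mxE.
move=> [w ->].
exists (w ord0 (inord 0)), (w ord0 (inord 1)), (w ord0 (inord 2)), (w ord0 (inord 3)),
  (w ord0 (inord 4)), (w ord0 (inord 5)), (w ord0 (inord 6)).
apply/body_holds => j Hj.
rewrite -/(chain _ _ _ _ _ _ _ _) chain_lo //.
rewrite -[in LHS](@inordK 6 j Hj) env_lo mxE; apply: PhiA_ext => k.
rewrite chain_hi; case: k => [[|[|[|[|[|[|[|k]]]]]]] Hk] //=.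
all: by f_equal; apply: val_inj; rewrite /= inordK.
Qed.

End Sem.

Section Hom.
Variable R : numClosedFieldType.

Definition hom (d : nat) (q : {poly R}) : {poly {poly R}} :=
  \poly_(i < d.+1) (q`_i *: 'X^(d - i)).

Lemma hom_coef d q i j :
  (hom d q)`_i`_j = if (i <= d)%N && (j == d - i)%N then q`_i else 0.
Proof.
rewrite /hom coef_poly ltnS; case: (i <= d)%N => /=; last by rewrite coef0.
by rewrite coefZ coefXn; case: (j == d - i)%N; rewrite ?mulr1 ?mulr0.
Qed.

Lemma homog_hom d q : homog d (hom d q).
Proof.
move=> i j; rewrite hom_coef; case: ifP => [/andP[Hi /eqP->] _|_]; last by rewrite eqxx.
by rewrite subnKC.
Qed.

Arguments homog_hom d q : clear implicits.

Lemma homogD d (P Q : {poly {poly R}}) : homog d P -> homog d Q -> homog d (P + Q).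
Proof.
move=> HP HQ i j; rewrite !coefD.
case: (eqVneq (P`_i`_j) 0) => [->|/HP //]; rewrite add0r; exact: HQ.
Qed.

Lemma homogM a b (P Q : {poly {poly R}}) : homog a P -> homog b Q -> homog (a + b) (P * Q).
Proof.
move=> HP HQ i j; apply: contraNeq => ne.
rewrite coefM coef_sum; apply/eqP; apply: big1 => k _.
rewrite coefM; apply: big1 => l _.
case: (eqVneq (P`_k`_l) 0) => [->|/HP Hk]; first by rewrite mul0r.
case: (eqVneq (Q`_(i - k)`_(j - l)) 0) => [->|/HQ Hl]; first by rewrite mulr0.
move: ne; have := ltn_ord k; have := ltn_ord l; lia.
Qed.

Definition dehom (P : {poly {poly R}}) : {poly R} := map_poly (horner_eval 1) P.

Lemma homog_row d (P : {poly {poly R}}) i : homog d P -> P`_i = P`_i`_(d - i) *: 'X^(d - i).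
Proof.
move=> HP; apply/polyP => m; rewrite coefZ coefXn.
case: eqP => [->|ne]; first by rewrite mulr1.
rewrite mulr0; apply/eqP; apply: contraT => H; have E := HP i m H.
by exfalso; apply: ne; lia.
Qed.

Arguments homog_row {d P} i.

Lemma dehom_coef d (P : {poly {poly R}}) i : homog d P -> (dehom P)`_i = P`_i`_(d - i).
Proof.
by move=> HP; rewrite coef_map /= horner_evalE (homog_row i HP) hornerZ hornerXn expr1n mulr1 coefZ coefXn eqxx mulr1.
Qed.

Arguments dehom_coef {d P} i.

Lemma dehom_hom d (q : {poly R}) : (size q <= d.+1)%N -> dehom (hom d q) = q.
Proof.
move=> Hs; apply/polyP => i; rewrite (dehom_coef i (homog_hom d q)) hom_coef eqxx andbT.
case: leqP => // Hi; rewrite nth_default //; exact: leq_trans Hs Hi.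
Qed.

Lemma homog_eq d (P Q : {poly {poly R}}) : homog d P -> homog d Q ->
  (forall i, (i <= d)%N -> P`_i`_(d - i) = Q`_i`_(d - i)) -> P = Q.
Proof.
move=> HP HQ H; apply/polyP => i; apply/polyP => j.
case: (eqVneq (i + j)%N d) => [E|ne].
  by rewrite (_ : j = d - i)%N ?H //; lia.
case: (eqVneq (P`_i`_j) 0) => [->|/HP E]; last by move: ne; rewrite E eqxx.
case: (eqVneq (Q`_i`_j) 0) => [->|/HQ E] //; by move: ne; rewrite E eqxx.
Qed.

Lemma homog_coef_hi d (P : {poly {poly R}}) i : homog d P -> (d < i)%N -> P`_i`_(d - i) = 0.
Proof.
move=> HP Hi; apply/eqP; apply: contraT => H; have := HP _ _ H; lia.
Qed.

End Hom.
Arguments homog_hom {R} d q.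
Arguments dehom_coef {R d P} i.

Theorem theorem1p5 (R : numClosedFieldType) :
  exists S : ('rV[R]_7 -> R) -> Prop,
    (forall h, S h -> polyfun h) /\
    (exists p : {poly {poly R}}, homog 6 p /\ ~ zero_locus S (coords 6 p)) /\
    (forall p : {poly {poly R}}, homog 6 p -> ~ zero_locus S (coords 6 p) ->
       exists f g : {poly {poly R}},
         [/\ homog 3 f, homog 2 g & p = f ^+ 2 + g ^+ 3]).
Proof.
pose psi := GRing.quantifier_elim (@ClosedFieldQE.ex_elim R) (@Fform R).
have /andP[qpsi rpsi] := GRing.quantifier_elim_wf (@ClosedFieldQE.wf_ex_elim R) (@rFform R).
have HE : forall v : 'rV[R]_7, GRing.qf_eval (env v) psi <-> exists w, v = Phi w.
  move=> v; rewrite -Fform_env.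
  have := GRing.quantifier_elim_rformP (@ClosedFieldQE.wf_ex_elim R)
    (ClosedFieldQE.holds_ex_elim (@solve_monicpoly R)) (env v) (@rFform R).
  by move=> /rwP [A B]; split.
have [q [b [[v0 Hv0] Hq]]] := generic_qf 7 qpsi rpsi.
case: b Hq => Hq; last first.
  exfalso.
  have Dom := @dominance R 7 (@Phi R) (PhiA (A := {poly R})) (@J R) (@Phi_curve R)
    (fun w j k => ltac:(by rewrite /J mxE)) (@J_linep R) (ex_intro _ w0 (@J_det R)) q.
  case: (classic (exists w, eval q (Phi w) != 0)) => [[w Hw]|Hn].
    have := Hq _ Hw; have [_ ->] := HE (Phi w); [by [] | by exists w].
  move: Hv0; rewrite Dom ?eqxx // => w; apply/eqP; apply: negbNE; apply/negP => K.
  by apply: Hn; exists w.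
exists (fun h => h = eval q); split; first by move=> h ->; exact: polyfun_eval.
split.
  exists (hom 6 (\poly_(i < 7) v0 ord0 (inord i))); split; first exact: homog_hom.
  move=> Z; have := Z (eval q) erefl.
  have -> : coords 6 (hom 6 (\poly_(i < 7) v0 ord0 (inord i))) = v0.
    apply/rowP => i; rewrite mxE hom_coef -ltnS ltn_ord eqxx /=.
    by rewrite coef_poly ltn_ord inord_val.
  by move/eqP; rewrite (negbTE Hv0).
move=> p Hp Hz.
have Hq0 : eval q (coords 6 p) != 0.
  by apply/negP => /eqP K; apply: Hz => h ->.
have [w Hw] := (proj1 (HE _)) (Hq _ Hq0).
pose F := \poly_(i < 4) w ord0 (inord i).
pose G := \poly_(i < 3) w ord0 (inord (4 + i)).
exists (hom 3 F), (hom 2 G); split; [exact: homog_hom | exact: homog_hom |].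
have HF := homog_hom 3 F; have HG := homog_hom 2 G.
have H6 : homog 6 (hom 3 F ^+ 2 + hom 2 G ^+ 3).
  apply: homogD; first by rewrite expr2; exact: (homogM HF HF).
  by rewrite !exprS expr0 mulr1 (_ : 6 = 2 + (2 + 2))%N //; apply: homogM => //; apply: homogM.
have HEQ := homog_eq Hp H6; apply: HEQ => i Hi.
rewrite -(dehom_coef i H6) /dehom rmorphD !rmorphXn /= -!/(dehom _).
rewrite !dehom_hom; first last.
- by apply: leq_trans (size_poly _ _) _.
- by apply: leq_trans (size_poly _ _) _.
have := congr1 (fun v : 'rV[R]_7 => v ord0 (inord i)) Hw; rewrite !mxE inordK // => ->.
by rewrite /PhiA inordK.
Qed.
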